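(* A sequence $(a_n(q))_{n\ge1}$ in $\mathbb{Z}[q]$ is a $q$-Gauss sequence if and only if there exists a sequence $(g_n(q))_{n\ge1}$ in $\mathbb{Z}[q]$ such that $a_n(q)=\sum_{d\mid n}\left[\tfrac{n}{d}\right]_{q^d}g_{n/d}(q^d)$ for all $n\ge1$.
   Context: $\mu$ is the Möbius function; $[k]_{x}=1+x+\dots+x^{k-1}$, so $[k]_{q^d}=1+q^d+\dots+q^{d(k-1)}$ and $[n]_q=1+q+\dots+q^{n-1}$. A sequence $(a_n(q))$ in $\mathbb{Z}[q]$ is a $q$-Gauss sequence if $[n]_q$ divides $\sum_{d\mid n}\mu(d)a_{n/d}(q^d)$ in $\mathbb{Z}[q]$ for all $n\ge1$. *)

(* Defs.v *)
From mathcomp Require Import all_boot all_order all_algebra.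
Set Implicit Arguments. Unset Strict Implicit. Unset Printing Implicit Defensive.
Import GRing.Theory.
Local Open Scope ring_scope.

Definition moebius (n : nat) : int :=
  if [forall p : 'I_n.+1, prime p ==> ~~ (p * p %| n)%N]
  then (-1) ^+ size (primes n) else 0.

Definition qint (k : nat) (x : {poly int}) : {poly int} := \sum_(i < k) x ^+ i.

Definition subst_pow (p : {poly int}) (d : nat) : {poly int} := p \Po 'X^d.

(* divisibility in Z[q] (genuine, not pseudo-division) *)
Definition zdvd (p s : {poly int}) : Prop := exists r : {poly int}, s = r * p.

(* (a_n)_{n>=1} is a q-Gauss sequence; a 0 is irrelevant. *)
Definition qGauss (a : nat -> {poly int}) : Prop :=
  forall n : nat, (0 < n)%N ->
    zdvd (qint n 'X)
      (\sum_(d <- divisors n) (moebius d)%:~R *: subst_pow (a (n %/ d)%N) d).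

(* Main.v *)
Require Import Defs.
From mathcomp Require Import all_boot all_order all_algebra.
Import GRing.Theory.
Local Open Scope ring_scope.

Lemma sqfreeP n : (0 < n)%N ->
  reflect (forall q, prime q -> ~~ (q * q %| n)%N)
          [forall q : 'I_n.+1, prime q ==> ~~ (q * q %| n)%N].
Proof.
move=> n0; apply: (iffP forallP) => H q.
- move=> pq; apply/negP => qq.
  have qn : (q < n.+1)%N.
    rewrite ltnS (leq_trans _ (dvdn_leq n0 qq)) // leq_pmulr //.
    exact: prime_gt0.
  by move: (H (Ordinal qn)) => /= /implyP /(_ pq) /negP.
- by apply/implyP => /H.
Qed.

Lemma mu_sq p d : prime p -> (p * p %| d)%N -> (0 < d)%N -> moebius d = 0.
Proof.
move=> pp pd d0; rewrite /moebius; case: (sqfreeP _ d0) => // H.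
by move: (H p pp); rewrite pd.
Qed.

Lemma size_primes_p p e : prime p -> ~~ (p %| e)%N -> (0 < e)%N ->
  size (primes (p * e)) = (size (primes e)).+1.
Proof.
move=> pp pe e0.
have -> : (size (primes e)).+1 = size (p :: primes e) by [].
apply: perm_size; apply: uniq_perm; first exact: primes_uniq.
  by rewrite /= primes_uniq mem_primes pp e0 (negbTE pe).
by move=> q; rewrite (primesM _ (prime_gt0 pp) e0) (primes_prime pp) !inE.
Qed.

Lemma mu_mul_p p e : prime p -> ~~ (p %| e)%N -> (0 < e)%N ->
  moebius (p * e) = - moebius e.
Proof.
move=> pp pe e0.
have pe0 : (0 < p * e)%N by rewrite muln_gt0 prime_gt0.
rewrite /moebius; case: (sqfreeP _ pe0) => H1; case: (sqfreeP _ e0) => H2.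
- by rewrite size_primes_p // exprS mulN1r.
- exfalso; apply: H2 => q pq; apply/negP => qe.
  by move: (H1 q pq); rewrite dvdn_mull.
- exfalso; apply: H1 => q pq; apply/negP => qpe.
  have [qp|qp] := eqVneq q p.
    by subst q; move: qpe; rewrite (dvdn_pmul2l (prime_gt0 pp)) (negbTE pe).
  have cq : coprime (q * q) p.
    by rewrite coprimeMl prime_coprime // dvdn_prime2 // qp.
  by move: qpe; rewrite Gauss_dvdr // => qe; move: (H2 q pq); rewrite qe.
- by rewrite oppr0.
Qed.

Lemma mu1 : moebius 1 = 1.
Proof.
rewrite /moebius.
have -> : [forall p : 'I_2, prime p ==> ~~ (p * p %| 1)%N] by apply/forallP; case=> [[|[|]]].
by [].
Qed.

Lemma mu_sum m : (0 < m)%N -> \sum_(d <- divisors m) moebius d = (m == 1%N)%:R.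
Proof.
move=> m0; case: eqP => [->|/eqP m1].
  have -> : divisors 1 = [:: 1%N] by rewrite /divisors /=.
  by rewrite big_seq1 mu1.
have m1' : (1 < m)%N by rewrite ltn_neqAle eq_sym m1 m0.
have [p pp pm] : exists2 p, prime p & (p %| m)%N by exists (pdiv m); [exact: pdiv_prime | exact: pdiv_dvd].
have p0 := prime_gt0 pp.
have [k mk] : exists k, m = (p * k)%N by exists (m %/ p)%N; rewrite mulnC divnK.
have k0 : (0 < k)%N by move: m0; rewrite mk muln_gt0 => /andP[].
rewrite mk (bigID (fun d => p %| d)%N) /=.
have E1 : perm_eq [seq d <- divisors (p * k) | (p %| d)%N] (map (muln p) (divisors k)).
  apply: uniq_perm; first by rewrite filter_uniq ?divisors_uniq.
    by rewrite map_inj_uniq ?divisors_uniq // => x y /eqP; rewrite eqn_pmul2l // => /eqP.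
  move=> d; rewrite mem_filter -dvdn_divisors ?muln_gt0 ?p0 //.
  apply/andP/mapP.
    case=> /dvdnP[d' ->] H; exists d'.
      by rewrite -dvdn_divisors // -(dvdn_pmul2l p0) mulnC.
    by rewrite mulnC.
  case=> d' Hd' ->; split; first exact: dvdn_mulr.
  by rewrite dvdn_pmul2l // dvdn_divisors.
have E2 : perm_eq [seq d <- divisors (p * k) | ~~ (p %| d)%N]
                  [seq d <- divisors k | ~~ (p %| d)%N].
  apply: uniq_perm; try by rewrite filter_uniq ?divisors_uniq.
  move=> d; rewrite !mem_filter -!dvdn_divisors ?muln_gt0 ?p0 //.
  case pd: (p %| d)%N => //=.
  rewrite Gauss_dvdr // coprime_sym prime_coprime // pd //.
rewrite -[X in X + _]big_filter -[X in _ + X]big_filter (perm_big _ E1) (perm_big _ E2).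
rewrite big_filter big_map (bigID (fun d => p %| d)%N) /=.
rewrite big1_seq; last first.
  move=> d /andP[pd Hd]; apply: (mu_sq _ _ pp).
    by rewrite dvdn_pmul2l.
  by rewrite muln_gt0 p0 /=; apply: (@dvdn_gt0 _ k) => //; rewrite dvdn_divisors.
rewrite add0r big_seq_cond [X in _ + X]big_seq_cond.
rewrite (eq_bigr (fun d => - moebius d)); last first.
  move=> d /andP[Hd pd]; apply: mu_mul_p => //.
  by apply: (@dvdn_gt0 _ k) => //; rewrite dvdn_divisors.
by rewrite sumrN addNr.
Qed.

Lemma swap_div (V : nmodType) n (F : nat -> nat -> V) : (0 < n)%N ->
  \sum_(d <- divisors n) \sum_(e <- divisors (n %/ d)%N) F d e =
  \sum_(m <- divisors n) \sum_(d <- divisors m) F d (m %/ d)%N.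
Proof.
move=> n0.
pose G (p : nat * nat) := F p.1 p.2.
have -> : \sum_(d <- divisors n) \sum_(e <- divisors (n %/ d)%N) F d e =
  \sum_(p <- [seq (d, e) | d <- divisors n, e <- divisors (n %/ d)%N]) G p.
  by rewrite big_allpairs_dep.
have -> : \sum_(m <- divisors n) \sum_(d <- divisors m) F d (m %/ d)%N =
  \sum_(p <- [seq (d, (m %/ d)%N) | m <- divisors n, d <- divisors m]) G p.
  by rewrite big_allpairs_dep.
apply: perm_big; apply: uniq_perm.
- apply: allpairs_uniq_dep; first exact: divisors_uniq.
    by move=> x _; exact: divisors_uniq.
  by case=> [x1 y1] [x2 y2] _ _ /= [-> ->].
- apply: allpairs_uniq_dep; first exact: divisors_uniq.
    by move=> x _; exact: divisors_uniq.
  case=> [m1 d1] [m2 d2] /allpairsPdep[x1 [y1 [Hx1 Hy1 E1]]] /allpairsPdep[x2 [y2 [Hx2 Hy2 E2]]] /= [Ed Eq].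
  case: E1 => ??; case: E2 => ??; subst.
  have x10 : (0 < x1)%N by apply: (@dvdn_gt0 _ n) => //; rewrite dvdn_divisors.
  have x20 : (0 < x2)%N by apply: (@dvdn_gt0 _ n) => //; rewrite dvdn_divisors.
  move: Hy1 Hy2; rewrite -!dvdn_divisors // => Hy1 Hy2.
  by rewrite -(divnK Hy1) -(divnK Hy2) Eq.
move=> [x y]; apply/allpairsPdep/allpairsPdep.
  case=> d [e [Hd He [-> ->]]].
  have d0 : (0 < d)%N by apply: (@dvdn_gt0 _ n) => //; rewrite dvdn_divisors.
  have Hd' : (d %| n)%N by rewrite dvdn_divisors.
  have nd0 : (0 < n %/ d)%N by rewrite divn_gt0 // dvdn_leq.
  have He' : (e %| n %/ d)%N by rewrite dvdn_divisors.
  have e0 : (0 < e)%N by apply: (@dvdn_gt0 _ (n %/ d)).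
  exists (d * e)%N, d; split; rewrite -?dvdn_divisors ?muln_gt0 ?d0 ?e0 ?mulKn //.
  - by rewrite mulnC -dvdn_divRL.
  - exact: dvdn_mulr.
case=> m [d [Hm Hd [-> ->]]].
have m0 : (0 < m)%N by apply: (@dvdn_gt0 _ n) => //; rewrite dvdn_divisors.
move: Hm Hd; rewrite -!dvdn_divisors // => Hm Hd.
have d0 : (0 < d)%N by apply: (@dvdn_gt0 _ m).
exists d, (m %/ d)%N; split => //; rewrite -?dvdn_divisors ?divn_gt0 ?(dvdn_trans Hd) //.
  by rewrite dvdn_divRL ?divnK // (dvdn_trans Hd).
by rewrite dvdn_leq // (dvdn_trans Hd).
Qed.

Definition conv (f : nat -> int) (x : nat -> {poly int}) (n : nat) : {poly int} :=
  \sum_(d <- divisors n) (f d)%:~R *: subst_pow (x (n %/ d)%N) d.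
Definition dconv (f h : nat -> int) (m : nat) : int :=
  \sum_(d <- divisors m) f d * h (m %/ d)%N.

Lemma XnX d e : ('X^e \Po 'X^d : {poly int}) = 'X^(e * d).
Proof.
elim: e => [|e IH]; first by rewrite !expr0 -polyC1 comp_polyC.
by rewrite exprS comp_polyM IH comp_polyX mulSn exprD.
Qed.

Lemma subst_powM p d e : subst_pow (subst_pow p e) d = subst_pow p (e * d).
Proof. by rewrite /subst_pow -comp_polyA XnX. Qed.

Lemma subst_pow1 p : subst_pow p 1 = p.
Proof. by rewrite /subst_pow expr1 comp_polyXr. Qed.

Lemma subst_pow_sum I (r : seq I) (F : I -> {poly int}) d :
  subst_pow (\sum_(i <- r) F i) d = \sum_(i <- r) subst_pow (F i) d.
Proof.
elim: r => [|i r IH]; first by rewrite !big_nil /subst_pow comp_polyC.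
by rewrite !big_cons /subst_pow comp_polyD -IH.
Qed.

Lemma subst_powZ c p d : subst_pow (c *: p) d = c *: subst_pow p d.
Proof. exact: comp_polyZ. Qed.

Lemma subst_powMul p q d : subst_pow (p * q) d = subst_pow p d * subst_pow q d.
Proof. exact: comp_polyM. Qed.

Lemma qint_subst k d : subst_pow (qint k 'X) d = qint k ('X^d).
Proof.
rewrite /qint subst_pow_sum; apply: eq_bigr => i _.
by rewrite /subst_pow XnX mulnC exprM.
Qed.

Lemma conv_conv f h x n : (0 < n)%N ->
  conv f (conv h x) n = conv (dconv f h) x n.
Proof.
move=> n0; rewrite /conv /dconv.
pose F d e := (f d * h e)%:~R *: subst_pow (x (n %/ (d * e))%N) (d * e).
transitivity (\sum_(d <- divisors n) \sum_(e <- divisors (n %/ d)%N) F d e).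
  apply: eq_bigr => d _; rewrite subst_pow_sum scaler_sumr.
  apply: eq_bigr => e _; rewrite subst_powZ subst_powM scalerA /F.
  by rewrite divnMA mulnC !intz.
rewrite swap_div //; rewrite big_seq [RHS]big_seq; apply: eq_bigr => m Hm.
rewrite intz scaler_suml big_seq [RHS]big_seq; apply: eq_bigr => d Hd.
have m0 : (0 < m)%N by apply: (@dvdn_gt0 _ n) => //; rewrite dvdn_divisors.
have dm : (d %| m)%N by rewrite dvdn_divisors.
by rewrite /F mulnC divnK // intz.
Qed.
Lemma conv_delta x n : (0 < n)%N -> conv (fun m => (m == 1%N)%:R) x n = x n.
Proof.
move=> n0; rewrite /conv (bigD1_seq 1%N) ?divisors_uniq //; last first.
  by rewrite -dvdn_divisors // dvd1n.
rewrite big1 => [|d /negbTE ->]; last by rewrite scale0r.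
by rewrite /= addr0 divn1 subst_pow1 intz scale1r.
Qed.

Lemma conv_eq_f f f' x n : (0 < n)%N -> (forall d, (d %| n)%N -> f d = f' d) ->
  conv f x n = conv f' x n.
Proof.
move=> n0 H; rewrite /conv big_seq [RHS]big_seq; apply: eq_bigr => d Hd.
by rewrite H // dvdn_divisors.
Qed.

Lemma conv_eq_x f x x' n : (0 < n)%N -> (forall m, (0 < m)%N -> x m = x' m) ->
  conv f x n = conv f x' n.
Proof.
move=> n0 H; rewrite /conv big_seq [RHS]big_seq; apply: eq_bigr => d Hd.
have dn : (d %| n)%N by rewrite dvdn_divisors.
have d0 : (0 < d)%N by apply: (@dvdn_gt0 _ n).
by rewrite H // divn_gt0 // dvdn_leq.
Qed.

Lemma divDiv m d : (0 < m)%N -> (d %| m)%N -> (m %/ (m %/ d))%N = d.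
Proof.
move=> m0 dm; have d0 : (0 < d)%N by apply: (@dvdn_gt0 _ m).
by rewrite -{1}(divnK dm) mulKn // divn_gt0 // dvdn_leq.
Qed.

Lemma div_invol m (G : nat -> int) : (0 < m)%N ->
  \sum_(d <- divisors m) G (m %/ d)%N = \sum_(d <- divisors m) G d.
Proof.
move=> m0; rewrite -(big_map (fun d => (m %/ d)%N) xpredT G).
apply: perm_big; apply: uniq_perm; last 1 first.
- move=> e; apply/mapP/idP.
    case=> d Hd ->; rewrite -dvdn_divisors //.
    have dm : (d %| m)%N by rewrite dvdn_divisors.
    by rewrite -{2}(divnK dm) dvdn_mulr.
  move=> He; exists (m %/ e)%N.
    have em : (e %| m)%N by rewrite dvdn_divisors.
    by rewrite -dvdn_divisors // -{2}(divnK em) dvdn_mulr.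
  by rewrite divDiv // dvdn_divisors.
- rewrite map_inj_in_uniq ?divisors_uniq // => d1 d2 H1 H2 E.
  have d1m : (d1 %| m)%N by rewrite dvdn_divisors.
  have d2m : (d2 %| m)%N by rewrite dvdn_divisors.
  by rewrite -(divDiv _ _ m0 d1m) E divDiv.
- exact: divisors_uniq.
Qed.

Lemma term_eq (g : nat -> {poly int}) m :
  \sum_(d <- divisors m) qint (m %/ d)%N ('X^d) * subst_pow (g (m %/ d)%N) d =
  conv (fun _ => 1) (fun k => g k * qint k 'X) m.
Proof.
rewrite /conv; apply: eq_bigr => d _.
by rewrite intz scale1r subst_powMul qint_subst mulrC.
Qed.

Theorem mainTheorem13 (a : nat -> {poly int}) :
  qGauss a <->
  exists g : nat -> {poly int},
    forall n : nat, (0 < n)%N ->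
      a n = \sum_(d <- divisors n)
              qint (n %/ d)%N ('X^d) * subst_pow (g (n %/ d)%N) d.
Proof.
split.
- move=> H.
  have E : forall n, exists r : {poly int},
      (0 < n)%N ==> (conv moebius a n == r * qint n 'X).
    move=> n; case: (posnP n) => [->|n0]; first by exists 0.
    by case: (H n n0) => r Hr; exists r; apply/implyP => _; apply/eqP.
  exists (fun n => xchoose (E n)) => n n0.
  rewrite (term_eq (fun n => xchoose (E n))).
  rewrite (conv_eq_x _ _ (conv moebius a) _ n0); last first.
    by move=> m m0; move: (xchooseP (E m)) => /implyP /(_ m0) /eqP Hm; exact: (esym Hm).
  rewrite conv_conv // -[LHS](conv_delta a _ n0); apply: conv_eq_f => // d dn.
  have d0 : (0 < d)%N by apply: (@dvdn_gt0 _ n).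
  rewrite /dconv; under eq_bigr => e _ do rewrite mul1r.
  by rewrite (div_invol _ (fun e => moebius e)) // mu_sum.
- case=> g Hg n n0.
  change (zdvd (qint n 'X) (conv moebius a n)).
  exists (g n).
  rewrite (conv_eq_x _ _ (conv (fun _ => 1) (fun k => g k * qint k 'X)) _ n0); last first.
    by move=> m m0; rewrite Hg // term_eq.
  rewrite conv_conv // -[RHS](conv_delta (fun k => g k * qint k 'X) _ n0).
  apply: conv_eq_f => // d dn.
  have d0 : (0 < d)%N by apply: (@dvdn_gt0 _ n).
  rewrite /dconv; under eq_bigr => e _ do rewrite mulr1.
  by rewrite mu_sum.
Qed.
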